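(* Let $\log_{Ab}(x)=x+\sum_{i\ge1}m_ix^{i+1}$, $m_i\in\mathbb{Q}[a_1,a_2]$, be the logarithm of the universal Abel formal group law. Then for every $n\ge2$, $$m_{n-1}=\frac1n\prod_{j=1}^{n-1}\left(\frac{n-2j}{\sqrt{j(n-j)}}\sqrt{2a_2}-a_1\right),$$ where the right-hand side (in which the factors for $j$ and $n-j$ combine to $a_1^2-\frac{2(n-2j)^2}{j(n-j)}a_2$, and the factor for $j=n/2$ equals $-a_1$) is a polynomial in $a_1,a_2$.
   Context: The universal Abel formal group law is the formal group law over $\mathbb{Q}[a_1,a_2]$ ($a_1,a_2$ free parameters) of the form $\mathcal{F}_{Ab}(x,y)=xR(y)+yR(x)$ with $R(x)=1+\frac{a_1}{2}x+a_2x^2+a_3x^3+\cdots$, where the coefficients $a_n\in\mathbb{Q}[a_1,a_2]$, $n\ge3$, are uniquely determined by associativity (e.g. $a_3=-\frac23a_1a_2$, $a_4=\frac12a_1^2a_2-\frac12a_2^2$). Its logarithm is $\log_{Ab}(x)=\int_0^x\frac{dt}{1+a_1t+a_2t^2+a_3t^3+\cdots}$; e.g. $m_1=-\frac12a_1$, $m_2=\frac13(a_1^2-a_2)$. *)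

(* Defs.v *)
(* Q[a1,a2] is modelled as {poly {poly rat}}:
   a1 = inner variable (constant of the outer ring), a2 = outer variable. *)
From HB Require Import structures.
From mathcomp Require Import all_boot all_order all_algebra.
Set Implicit Arguments. Unset Strict Implicit. Unset Printing Implicit Defensive.
Import Order.TTheory GRing.Theory Num.Theory.
Local Open Scope ring_scope.

Notation QA := {poly {poly rat}}.
Definition a1 : QA := ('X : {poly rat})%:P.
Definition a2 : QA := 'X.
Definition cst (q : rat) : QA := (q%:P)%:P.

(* Formal power series in two variables, by coefficients: f i j = coeff of x^i y^j. *)
Definition one2 (i j : nat) : QA := ((i == 0%N) && (j == 0%N))%:R.
Definition mul2 (f g : nat -> nat -> QA) (i j : nat) : QA :=
  \sum_(p < i.+1) \sum_(q < j.+1) f p q * g (i - p)%N (j - q)%N.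
Fixpoint pow2 (f : nat -> nat -> QA) (n : nat) : nat -> nat -> QA :=
  match n with 0%N => one2 | n'.+1 => mul2 f (pow2 f n') end.

(* r n = coefficient of x^n in R(x) = 1 + a1/2 x + a2 x^2 + a3 x^3 + ...
   abelF r = the series F(x,y) = x R(y) + y R(x). *)
Definition abelF (r : nat -> QA) (i j : nat) : QA :=
  (i == 1%N)%:R * r j + (j == 1%N)%:R * r i.

(* Coefficient of x^i y^j in R(G(x,y)) for a series G with G(0,0) = 0
   (then G^n only has monomials of total degree >= n, so the sum is finite). *)
Definition compR (r : nat -> QA) (G : nat -> nat -> QA) (i j : nat) : QA :=
  \sum_(n < (i + j).+1) r n * pow2 G n i j.

(* Associativity F(F(x,y),z) = F(x,F(y,z)), compared coefficientwise on x^i y^j z^k: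
   F(F(x,y),z) = F(x,y) R(z) + z R(F(x,y)),  F(x,F(y,z)) = x R(F(y,z)) + F(y,z) R(x). *)
Definition abel_assoc (r : nat -> QA) : Prop :=
  forall i j k : nat,
    abelF r i j * r k + (k == 1%N)%:R * compR r (abelF r) i j
    = (i == 1%N)%:R * compR r (abelF r) j k + r i * abelF r j k.

Definition is_universal_abel (r : nat -> QA) : Prop :=
  [/\ r 0%N = 1, r 1%N = cst (1/2) * a1, r 2%N = a2 & abel_assoc r].

Definition abel_den (r : nat -> QA) (n : nat) : QA :=
  match n with 0%N => 1 | 1%N => a1 | _ => r n end.

(* m is the logarithm: log(x) = x + sum_{i>=1} m i x^(i+1) (m 0 = 1), characterised by
   log(0) = 0 and log'(x) * (1 + a1 x + a2 x^2 + ...) = 1, coefficientwise. *)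
Definition is_abel_log (r m : nat -> QA) : Prop :=
  m 0%N = 1 /\
  forall n : nat, (0 < n)%N ->
    \sum_(k < n.+1) abel_den r k * ((n - k).+1)%:R * m (n - k)%N = 0.

(* Right-hand side, with the factors j and n-j combined:
   (1/n) * (-a1 if n even) * prod_{1<=j, 2j<n} (a1^2 - 2(n-2j)^2/(j(n-j)) a2). *)
Definition abel_rhs (n : nat) : QA :=
  cst (n%:R)^-1 * (if odd n then 1 else - a1) *
  \prod_(1 <= j < n | (2 * j < n)%N)
     (a1 ^+ 2 - cst ((2 * (n - 2 * j) ^ 2)%:R / (j * (n - j))%:R) * a2).

(* Main.v *)
Require Import Defs.
From HB Require Import structures.
From mathcomp Require Import all_boot all_order all_algebra.
From mathcomp Require Import ring zify.
Import Order.TTheory GRing.Theory Num.Theory.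
Local Open Scope ring_scope.

Definition al : QA := a2.
Definition be : QA := a1 - a2.
Definition de : QA := a2 + a2 - a1.
Definition kf (n : nat) : QA := cst ((n`!)%:R^-1).
Definition Qprod (n : nat) : {poly QA} :=
  \prod_(j < n.-1) ('X - (n%:R * al - j.+1%:R * de)%:P).
Definition Qp (n : nat) : {poly QA} := (kf n)%:P * Qprod n.
Definition C (n : nat) : {poly QA} := if n is n'.+1 then 'X * Qp n else 1.

Lemma cstM (a b : rat) : cst (a * b) = cst a * cst b.
Proof. by rewrite /cst !polyCM. Qed.
Lemma cst_nat (n : nat) : cst n%:R = n%:R.
Proof. by rewrite /cst !rmorph_nat. Qed.
Lemma cst1 : cst 1 = 1.
Proof. by rewrite /cst !polyC1. Qed.

Lemma kfS n : n.+1%:R * kf n.+1 = kf n.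
Proof.
rewrite /kf -cst_nat -cstM; congr cst.
rewrite factS natrM invfM mulrA divff ?mul1r //.
by rewrite pnatr_eq0.
Qed.
Lemma kf0 : kf 0 = 1. Proof. by rewrite /kf invr1 cst1. Qed.
Lemma kf1 : kf 1 = 1. Proof. by rewrite /kf invr1 cst1. Qed.

Lemma comp_prod I (s : seq I) (F : I -> {poly QA}) q :
  (\prod_(j <- s) F j) \Po q = \prod_(j <- s) (F j \Po q).
Proof.
elim: s => [|x s IH]; first by rewrite !big_nil comp_polyC.
by rewrite !big_cons comp_polyM IH.
Qed.

Lemma fX (u v w : QA) : u + v = w -> ('X - u%:P) - v%:P = 'X - w%:P.
Proof. by move=> <-; rewrite polyCD opprD addrA. Qed.

Lemma QprodR M : Qprod M.+2 =
  (Qprod M.+1 \Po ('X - al%:P)) * ('X - (M.+2%:R * al - M.+1%:R * de)%:P).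
Proof.
rewrite /Qprod /= big_ord_recr /= comp_prod; congr (_ * _).
apply: eq_bigr => j _; rewrite comp_polyB comp_polyX comp_polyC.
symmetry; apply: fX; ring.
Qed.

Lemma QprodL M : Qprod M.+2 \Po ('X - de%:P) =
  ('X - (M.+2%:R * al)%:P) * (Qprod M.+1 \Po ('X - al%:P)).
Proof.
rewrite /Qprod /= !comp_prod big_ord_recl /=; congr (_ * _).
  rewrite comp_polyB comp_polyX comp_polyC; apply: fX; ring.
apply: eq_bigr => j _; rewrite !comp_polyB !comp_polyX !comp_polyC.
rewrite (@fX _ _ (M.+2%:R * al - j.+1%:R * de)); last by rewrite /bump /=; ring.
by rewrite (@fX _ _ (M.+2%:R * al - j.+1%:R * de)) //; ring.
Qed.

Lemma PC N : C N.+1 - (C N.+1 \Po ('X - de%:P)) = de%:P * (C N \Po ('X - al%:P)).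
Proof.
case: N => [|M].
  rewrite /C /Qp /Qprod /= big_ord0 kf1 polyC1 !mulr1 comp_polyC comp_polyX mulr1; ring.
rewrite /C /Qp !comp_polyM !comp_polyX !comp_polyC QprodL QprodR.
set P := Qprod M.+1 \Po _.
rewrite -(kfS M.+1) !(rmorphB, rmorphM, rmorph_nat) /=.
ring.
Qed.

Lemma PQ N : N.+1%:R%:P * (Qp N.+1 - (Qp N.+1 \Po ('X - de%:P))) =
   (N%:R * de)%:P * (Qp N \Po ('X - al%:P)).
Proof.
case: N => [|M].
  by rewrite /Qp /Qprod /= big_ord0 mulr1 comp_polyC subrr mulr0 mul0r polyC0 mul0r.
rewrite /Qp comp_polyM comp_polyC QprodL QprodR comp_polyM comp_polyC.
set P := Qprod M.+1 \Po _.
rewrite -(kfS M.+1) !(rmorphB, rmorphM, rmorph_nat) /=.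
ring.
Qed.

Arguments C : simpl never.
Arguments Qp : simpl never.
Arguments kf : simpl never.
Arguments Qprod : simpl never.

Lemma natQA (n : nat) : (n%:R : QA) = ((n%:R : rat)%:P)%:P.
Proof. by rewrite !rmorph_nat. Qed.

Lemma natQA_inj (k l : nat) : (k%:R : QA) = l%:R -> k = l.
Proof.
rewrite !natQA => /polyC_inj /polyC_inj /eqP.
by rewrite eqr_nat => /eqP.
Qed.

Lemma natQA_neq0 (n : nat) : (n.+1%:R : QA) != 0.
Proof. by rewrite natQA !polyC_eq0 pnatr_eq0. Qed.

Lemma natQA' (n : nat) : (n%:R : {poly rat}) = (n%:R : rat)%:P.
Proof. by rewrite rmorph_nat. Qed.

Lemma de_neq0 : de != 0.
Proof.
apply/eqP => /(congr1 (fun p : QA => p`_1)).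
rewrite /de /a1 /a2 !coefD coefN coefX coefC /= => /eqP.
rewrite coef0 subr0 -(natrD _ 1 1) natQA' polyC_eq0 pnatr_eq0.
done.
Qed.

Lemma periodic (p : {poly QA}) (d : QA) :
  d != 0 -> p \Po ('X - d%:P) = p -> p = (p.[0])%:P.
Proof.
move=> dn0 hp; apply/eqP; rewrite -subr_eq0; apply/eqP.
set q := p - _.
have hq : q \Po ('X - d%:P) = q by rewrite /q comp_polyB hp comp_polyC.
have rk : forall k : nat, q.[k%:R * d] = 0.
  elim=> [|k IH]; first by rewrite mul0r /q hornerD hornerN hornerC subrr.
  by rewrite -hq horner_comp -[RHS]IH; congr (q.[_]); rewrite !hornerE mulrSr mulrDl mul1r addrK.
apply/eqP; apply/negPn/negP => qn0.
have H := max_poly_roots qn0 (rs := [seq k%:R * d | k <- iota 0 (size q)]).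
rewrite size_map size_iota ltnn in H; suff : false by []; apply: H.
  by apply/allP => x /mapP [k _ ->]; apply/rootP.
rewrite map_inj_uniq ?iota_uniq // => k l /eqP.
rewrite -subr_eq0 -mulrBl mulf_eq0 (negbTE dn0) orbF subr_eq0 => /eqP.
exact: natQA_inj.
Qed.

Lemma comp_sum I (s : seq I) (F : I -> {poly QA}) q :
  (\sum_(j <- s) F j) \Po q = \sum_(j <- s) (F j \Po q).
Proof.
elim: s => [|x s IH]; first by rewrite !big_nil comp_polyC.
by rewrite !big_cons comp_polyD IH.
Qed.

Lemma SS a b (p : {poly QA}) :
  (p \Po ('X + a%:P)) \Po ('X + b%:P) = p \Po ('X + (a + b)%:P).
Proof. by rewrite -comp_polyA comp_polyD comp_polyX comp_polyC polyCD addrA (addrAC _ b%:P). Qed.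

Lemma subXC (d : QA) : 'X - d%:P = 'X + (- d)%:P.
Proof. by rewrite polyCN. Qed.

Lemma C0' : C 0 = 1. Proof. by []. Qed.

Lemma CS0 k : (C k.+1).[0] = 0.
Proof. by rewrite /C hornerM hornerX mul0r. Qed.

Lemma C0 k : (C k).[0] = (k == 0)%:R.
Proof. by case: k => [|k]; rewrite /C ?hornerC // hornerM hornerX mul0r. Qed.

Lemma PC' N : C N.+1 - (C N.+1 \Po ('X + (- de)%:P)) =
   de%:P * (C N \Po ('X + (- al)%:P)).
Proof. by rewrite -!subXC PC. Qed.

Lemma conv (mu : QA) N :
  \sum_(k < N.+1) C k * ((C (N - k)).[mu])%:P = C N \Po ('X + mu%:P).
Proof.
elim: N => [|N IH].
  by rewrite big_ord1 /= /C hornerC mulr1 comp_polyC.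
apply/eqP; rewrite -subr_eq0; apply/eqP.
set G := _ - _.
have hG : G - (G \Po ('X + (- de)%:P)) = 0.
  rewrite /G comp_polyB comp_sum SS.
  have -> : forall a b c d : {poly QA}, a - b - (c - d) = (a - c) - (b - d)
    by move=> a b c d; ring.
  rewrite -sumrB big_ord_recl subn0.
  rewrite /= C0' !mul1r comp_polyC subrr add0r.
  under eq_bigr => k _ do rewrite comp_polyM comp_polyC -mulrBl PC'.
  rewrite -[mu + - de]addrC -SS -comp_polyB PC'.
  under eq_bigr => k _ do rewrite /bump /= add1n subSS -mulrA.
  rewrite -mulr_sumr comp_polyM comp_polyC SS.
  rewrite -[- al + mu]addrC -SS -IH comp_sum; apply/eqP; rewrite subr_eq0; apply/eqP.
  congr (_ * _); apply: eq_bigr => k _; by rewrite comp_polyM comp_polyC.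
have := @periodic G _ de_neq0.
rewrite subXC => ->; last by apply/eqP; rewrite eq_sym -subr_eq0 hG.
rewrite /G hornerD hornerN horner_comp horner_sum big_ord_recl.
rewrite big1 => [|k _]; last by rewrite hornerM hornerC /C /= !hornerM hornerX !mul0r.
by rewrite addr0 hornerM hornerC /C /= !hornerC subn0 mul1r !hornerE subrr.
Qed.

Definition hh (k : nat) : QA := k.+1%:R * (Qp k.+1).[0].

Lemma PQ' N : N.+1%:R%:P * (Qp N.+1 - (Qp N.+1 \Po ('X + (- de)%:P))) =
   (N%:R * de)%:P * (Qp N \Po ('X + (- al)%:P)).
Proof. by rewrite -!subXC PQ. Qed.

Lemma conv2 N :
  \sum_(k < N.+1) (hh k)%:P * C (N - k) = N.+1%:R%:P * Qp N.+1.
Proof.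
elim: N => [|N IH].
  by rewrite big_ord1 subn0 C0' mulr1 /hh /Qp /Qprod big_ord0 kf1 !mulr1 hornerC mulr1.
apply/eqP; rewrite -subr_eq0; apply/eqP.
set G := _ - _.
have hG : G - (G \Po ('X + (- de)%:P)) = 0.
  rewrite /G comp_polyB comp_sum comp_polyM comp_polyC.
  have -> : forall a b c d : {poly QA}, a - b - (c - d) = (a - c) - (b - d)
    by move=> a b c d; ring.
  rewrite -sumrB -mulrBr PQ' big_ord_recr /= subnn.
  rewrite comp_polyM comp_polyC -mulrBr C0' comp_polyC subrr mulr0 addr0.
  have e : forall k : 'I_N.+1, (N.+1 - k = (N - k).+1)%N.
    by move=> k; rewrite subSn // -ltnS.
  under eq_bigr => k _ do rewrite comp_polyM comp_polyC -mulrBr e PC'.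
  have -> : (N.+1%:R * de)%:P * (Qp N.+1 \Po ('X + (- al)%:P)) =
     de%:P * ((N.+1%:R%:P * Qp N.+1) \Po ('X + (- al)%:P)).
    by rewrite [in RHS]comp_polyM comp_polyC polyCM; ring.
  rewrite -IH comp_sum mulr_sumr -sumrB big1 // => k _.
  by rewrite comp_polyM comp_polyC mulrCA subrr.
have := @periodic G _ de_neq0.
rewrite subXC => ->; last by apply/eqP; rewrite eq_sym -subr_eq0 hG.
rewrite /G big_ord_recr !hornerD hornerN horner_sum.
rewrite big1 => [|k _]; last first.
  have e : (N.+1 - k = (N - k).+1)%N by rewrite subSn // -ltnS.
  by rewrite hornerM hornerC /= e CS0 mulr0.
by rewrite add0r hornerM hornerC /= subnn C0' hornerC mulr1 hornerM hornerC /hh subrr.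
Qed.


Lemma E1 M : M.+2%:R * (C M.+2).[al + al] =
   (al + al - M.+1%:R * (be + be)) * (C M.+1).[al].
Proof.
rewrite /C /Qp QprodR !hornerM !hornerX !hornerC horner_comp !hornerXsubC addrK.
rewrite -(kfS M.+1).
rewrite /de /be /al; ring.
Qed.

Lemma E2 M : M.+2%:R * (Qp M.+2).[al] = - (M.+1%:R * be) * (Qp M.+1).[0].
Proof.
rewrite /Qp QprodR !hornerM !hornerC horner_comp !hornerXsubC subrr.
rewrite -(kfS M.+1).
rewrite /de /be /al; ring.
Qed.

Definition Y : QA := cst (1/2) * (a2 * (a2 - a1)).

Lemma cc0 x : (C 0).[x] = 1. Proof. by rewrite C0' hornerC. Qed.
Lemma cc1 x : (C 1).[x] = x.
Proof. by rewrite /C /Qp /Qprod big_ord0 kf1 hornerM hornerX mulr1 hornerC mulr1. Qed.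
Lemma cc2 : (C 2).[al] = Y.
Proof.
rewrite /C /Qp /Qprod big_ord1 !hornerM hornerX hornerC hornerXsubC /kf /Y /=.
rewrite /de /al; ring.
Qed.
Lemma qq1 : (Qp 1).[0] = 1.
Proof. by rewrite /Qp /Qprod big_ord0 kf1 mulr1 hornerC. Qed.


Lemma sum_ind N k (G : nat -> QA) : (k < N)%N ->
  \sum_(p < N) (p == k :> nat)%:R * G p = G k.
Proof.
move=> hk; rewrite (bigD1 (Ordinal hk)) //= eqxx mul1r big1 ?addr0 // => j hj.
suff -> : (nat_of_ord j == k) = false by rewrite mul0r.
apply/negbTE; apply: contra hj => /eqP hj; apply/eqP/val_inj => /=; exact: hj.
Qed.

Lemma pow2_y0 (F : nat -> nat -> QA) (hF : forall p, F p 0%N = (p == 1)%:R) n i :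
  pow2 F n i 0 = (i == n)%:R.
Proof.
elim: n i => [|n IH] i; first by rewrite /= /one2 andbT.
rewrite /= /mul2.
under eq_bigr => p _ do rewrite big_ord1 /= hF IH.
case: i => [|i]; first by rewrite big_ord1 /= mul0r.
by rewrite (@sum_ind _ 1 (fun p => ((i.+1 - p)%N == n)%:R)) // subSS subn0 eqSS.
Qed.

Lemma pow2_y1 (F : nat -> nat -> QA) (hF : forall p, F p 0%N = (p == 1)%:R) n i :
  pow2 F n i 1 = if (n <= i.+1)%N then n%:R * F (i.+1 - n)%N 1%N else 0.
Proof.
elim: n i => [|n IH] i; first by rewrite /= /one2 andbF mul0r.
rewrite /= /mul2.
under eq_bigr => p _ do rewrite big_ord_recl big_ord1 /= hF IH (@pow2_y0 F hF).
rewrite big_split /=.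
case: i => [|i].
  rewrite !big_ord1 /= mul0r add0r.
  by case: n {IH} => [|n] /=; rewrite ?mul1r ?mulr1 ?mulr0.
rewrite (@sum_ind _ 1 (fun p => if (n <= (i.+1 - p).+1)%N then n%:R * F ((i.+1 - p).+1 - n)%N 1%N else 0)) //.
rewrite subSS subn0.
case: (leqP n i.+1) => hn.
  rewrite (eq_bigr (fun p : 'I_i.+2 => (p == (i.+1 - n)%N :> nat)%:R * F p 1%N)); last first.
    move=> p _ /=; rewrite mulrC; congr (_ * _); congr (_%:R).
    by case: p => q /= hq; apply/eqP/eqP; lia.
  rewrite (@sum_ind _ _ (fun p => F p 1%N)) ?ltnS ?leq_subr //.
  by rewrite hn subSS mulrSr mulrDl mul1r.
rewrite big1 => [|p _]; last first.
  rewrite (_ : ((i.+1 - p)%N == n) = false) ?mulr0 //.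
  by apply/negbTE; apply/eqP; have := ltn_ord p; lia.
by rewrite ltnS leqNgt hn addr0.
Qed.


Definition RecEq (f : nat -> QA) (i : nat) :=
  \sum_(n < i.+2) f n * (n%:R * (((i.+1 - n)%N == 1%N)%:R * f 1%N + f (i.+1 - n)%N))
  = f i * f 1%N.

Lemma rec_of_assoc r : is_universal_abel r -> forall i, (2 <= i)%N -> RecEq r i.
Proof.
case=> r0 r1 r2 ha i hi.
have hF : forall p, abelF r p 0%N = (p == 1%N)%:R.
  by move=> p; rewrite /abelF r0 mulr1 /= mul0r addr0.
have := ha i 1%N 1%N.
rewrite /abelF /= (_ : (i == 1%N) = false); last by apply/negbTE; lia.
rewrite !mul0r !add0r !mul1r => h.
have hc : compR r (abelF r) i 1 = r i * r 1%N.
  by apply: (addrI (r i * r 1%N)); rewrite h mulrDr.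
rewrite /RecEq -hc /compR addn1; apply: eq_bigr => n _.
rewrite (@pow2_y1 _ hF) -ltnS ltn_ord /abelF /= mul1r //.
Qed.

Lemma rec_unique (f g : nat -> QA) : f 0%N = 1 -> g 0%N = 1 -> f 1%N = g 1%N ->
  f 2%N = g 2%N -> (forall i, (2 <= i)%N -> RecEq f i) ->
  (forall i, (2 <= i)%N -> RecEq g i) -> forall n, f n = g n.
Proof.
move=> f0 g0 f1 f2 hf hg n; elim/ltn_ind: n => n IH.
case: n IH => [|[|[|i]]] IH; rewrite ?f0 ?g0 //.
have := hf i.+2 isT; have := hg i.+2 isT; rewrite /RecEq.
rewrite big_ord_recr big_ord_recl /= => hG.
rewrite big_ord_recr big_ord_recl /= => hF.
rewrite subnn /= !mulr0n !mul0r !add0r f0 mulr1 in hF.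
rewrite subnn /= !mulr0n !mul0r !add0r g0 mulr1 in hG.
have eS : forall k : 'I_i.+2, f (bump 0 k) *
       ((bump 0 k)%:R * (((i.+3 - bump 0 k)%N == 1%N)%:R * f 1%N + f (i.+3 - bump 0 k)%N))
   = g (bump 0 k) *
       ((bump 0 k)%:R * (((i.+3 - bump 0 k)%N == 1%N)%:R * g 1%N + g (i.+3 - bump 0 k)%N)).
  move=> k; have := ltn_ord k; rewrite /bump /= => hk.
  by rewrite f1 !IH //; lia.
rewrite (eq_bigr _ (fun k _ => eS k)) f1 (IH i.+2) // -hG in hF.
by move/addrI: hF; apply: mulIf; exact: natQA_neq0.
Qed.



Definition LogEq (d f : nat -> QA) (n : nat) :=
  \sum_(k < n.+1) d k * ((n - k).+1)%:R * f (n - k)%N = 0.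

Lemma log_unique (d f g : nat -> QA) : d 0%N = 1 -> f 0%N = g 0%N ->
  (forall n, (0 < n)%N -> LogEq d f n) -> (forall n, (0 < n)%N -> LogEq d g n) ->
  forall n, f n = g n.
Proof.
move=> d0 fg0 hf hg n; elim/ltn_ind: n => n IH.
case: n IH => [|n] IH //.
have := hf n.+1 isT; have := hg n.+1 isT; rewrite /LogEq.
rewrite big_ord_recl /= => hG.
rewrite big_ord_recl /= => hF.
have eS : forall k : 'I_n.+1, d (bump 0 k) * ((n.+1 - bump 0 k).+1)%:R * f (n.+1 - bump 0 k)%N
   = d (bump 0 k) * ((n.+1 - bump 0 k).+1)%:R * g (n.+1 - bump 0 k)%N.
  move=> k; have := ltn_ord k; rewrite /bump /= => hk.
  by rewrite IH //; lia.
rewrite (eq_bigr _ (fun k _ => eS k)) in hF.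
move: (etrans hF (esym hG)) => /addIr.
rewrite subn0 d0 !mul1r; apply: mulfI; exact: natQA_neq0.
Qed.


Lemma rev_conv (F : nat -> nat -> QA) N :
  \sum_(k < N.+1) F k (N - k)%N = \sum_(k < N.+1) F (N - k)%N k.
Proof.
rewrite (reindex_inj rev_ord_inj); apply: eq_bigr => k _ /=.
have := ltn_ord k; rewrite ltnS => hk.
by rewrite subSS subKn.
Qed.

Lemma symsum (a : nat -> QA) N :
  (\sum_(n < N.+1) n%:R * (a n * a (N - n)%N)) *+ 2 =
  N%:R * \sum_(n < N.+1) a n * a (N - n)%N.
Proof.
rewrite mulr2n {2}(rev_conv (fun n m => n%:R * (a n * a m))) -big_split mulr_sumr /=.
apply: eq_bigr => k _; have := ltn_ord k; rewrite ltnS => hk.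
rewrite natrB //; ring.
Qed.

Lemma conv_eval N :
  \sum_(k < N.+1) (C k).[al] * (C (N - k)).[al] = (C N).[al + al].
Proof.
have := congr1 (fun p => p.[al]) (conv al N).
rewrite /= horner_sum horner_comp hornerD hornerX hornerC => <-.
by apply: eq_bigr => k _; rewrite hornerM hornerC.
Qed.

Lemma conv2_eval N :
  \sum_(k < N.+1) hh k * (C (N - k)).[al] = N.+1%:R * (Qp N.+1).[al].
Proof.
have := congr1 (fun p => p.[al]) (conv2 N).
rewrite /= horner_sum hornerM hornerC => <-.
by apply: eq_bigr => k _; rewrite hornerM hornerC.
Qed.

Lemma Sval i : (2 <= i)%N ->
  \sum_(n < i.+2) n%:R * ((C n).[al] * (C (i.+1 - n)).[al]) = (al - i%:R * be) * (C i).[al].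
Proof.
move=> hi.
have h2 := symsum (fun n => (C n).[al]) i.+1.
rewrite conv_eval in h2.
case: i hi h2 => [|[|M]] // _ h2.
rewrite E1 in h2.
apply: (@mulIf _ 2%:R); first exact: natQA_neq0.
by rewrite mulr_natr h2; ring.
Qed.

Definition w : QA := cst (1/2) * a1 - al.
Definition Rs (k : nat) : QA := (C k).[al] + (k == 1%N)%:R * w.
Definition Ds (k : nat) : QA := (C k).[al] + (k == 1%N)%:R * be.
Definition Ms (n : nat) : QA := (Qp n.+1).[0].

Lemma cst_half : cst (1/2) + cst (1/2) = 1.
Proof. by rewrite /cst -!polyCD -cst1 /cst; congr (_%:P%:P); rewrite -mulr2n mulr_natl -mulrA mulVf. Qed.

Lemma Rs1 : Rs 1 = cst (1/2) * a1.
Proof. by rewrite /Rs cc1 /= mul1r /w; ring. Qed.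

Lemma Rs_rec i : (2 <= i)%N -> RecEq Rs i.
Proof.
move=> hi; rewrite /RecEq.
have hb : Rs 1 + w = be.
  rewrite Rs1 /w /be /al.
  transitivity ((cst (1/2) + cst (1/2)) * a1 - a2); first by ring.
  by rewrite cst_half mul1r.
have ht : forall n : 'I_i.+2, Rs n * (n%:R * (((i.+1 - n)%N == 1%N)%:R * Rs 1 + Rs (i.+1 - n)%N))
   = n%:R * ((C n).[al] * (C (i.+1 - n)).[al]) +
     (n == 1%N :> nat)%:R * (w * n%:R * (C (i.+1 - n)).[al]) +
     (n == i :> nat)%:R * (n%:R * (C n).[al] * be).
  move=> n; have := ltn_ord n; move: (nat_of_ord n) => k hk.
  have -> : ((i.+1 - k)%N == 1%N) = (k == i) by apply/eqP/eqP; lia.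
  rewrite /Rs (_ : ((i.+1 - k)%N == 1%N) = (k == i)); last by apply/eqP/eqP; lia.
  have [->|k1] := eqVneq k 1%N.
    rewrite (_ : (1 == i)%N = false); last by apply/negbTE; lia.
    rewrite /= -hb /Rs; ring.
  have [->|ki] := eqVneq k i.
    rewrite -hb /Rs /=; ring.
  rewrite /=; ring.
rewrite (eq_bigr _ (fun n _ => ht n)) !big_split /=.
rewrite Sval // (@sum_ind _ 1%N (fun n => w * n%:R * (C (i.+1 - n)).[al])) //.
rewrite (@sum_ind _ i (fun n => n%:R * (C n).[al] * be)) //.
rewrite Rs1 /Rs (_ : (i == 1%N) = false); last by apply/negbTE; lia.
rewrite /w subSS subn0 /=; ring.
Qed.

Lemma Ms_log n : (0 < n)%N -> LogEq Ds Ms n.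
Proof.
case: n => [|n] // _; rewrite /LogEq.
have ht : forall k : 'I_n.+2, Ds k * ((n.+1 - k).+1)%:R * Ms (n.+1 - k)%N
   = hh (n.+1 - k)%N * (C k).[al] +
     (k == 1%N :> nat)%:R * (be * ((n.+1 - k).+1)%:R * Ms (n.+1 - k)%N).
  by move=> k; rewrite /Ds /hh /Ms; ring.
rewrite (eq_bigr _ (fun k _ => ht k)) big_split /=.
rewrite (rev_conv (fun a b => hh b * (C a).[al])) conv2_eval E2.
rewrite (@sum_ind _ 1%N (fun k => be * ((n.+1 - k).+1)%:R * Ms (n.+1 - k)%N)) //.
rewrite subSS subn0 /Ms; ring.
Qed.

Lemma prod_split (R : comNzRingType) (F : nat -> R) n : (0 < n)%N ->
  \prod_(1 <= j < n) F j =
  (\prod_(1 <= j < n | (2 * j < n)%N) (F j * F (n - j)%N)) *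
  (if odd n then 1 else F n./2).
Proof.
move=> n0.
rewrite (bigID (fun j => (2 * j < n)%N)) /= big_split /= -mulrA; congr (_ * _).
rewrite (bigID (fun j => (2 * j == n)%N)) /= mulrC; congr (_ * _).
  rewrite big_nat_rev /= big_nat_cond [RHS]big_nat_cond.
  apply: eq_big => [j|j].
    by apply/idP/idP; lia.
  by move=> /andP [/andP [h1 h2] _]; congr F; lia.
have := odd_double_half n; case: (odd n) => /= hn.
  by rewrite big1 // => j /andP [_ /eqP h]; exfalso; lia.
set k := n./2 in hn *.
have k1 : (1 <= k)%N by lia.
rewrite (@big_cat_nat _ _ _ k) /=; [|lia|lia].
rewrite big_nat_cond big1 ?mul1r => [|j /andP [/andP [h1 h2] /andP [_ /eqP h]]]; last by exfalso; lia.
rewrite big_ltn_cond; last by lia.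
rewrite (_ : ~~ (2 * k < n)%N && (2 * k == n)%N); last by apply/andP; split; lia.
rewrite big_nat_cond big1 ?mulr1 // => j /andP [/andP [h1 h2] /andP [h3 /eqP h4]]; exfalso; lia.
Qed.


Lemma comp_sumQ I (s : seq I) (F : I -> QA) q :
  (\sum_(j <- s) F j) \Po q = \sum_(j <- s) (F j \Po q).
Proof.
elim: s => [|x s IH]; first by rewrite !big_nil comp_polyC.
by rewrite !big_cons comp_polyD IH.
Qed.

Lemma comp_nat n : (n%:R : QA) \Po Y = n%:R.
Proof. by rewrite -polyC_natr comp_polyC. Qed.
Lemma comp1 : (1 : QA) \Po Y = 1.
Proof. by rewrite -polyC1 comp_polyC. Qed.
Lemma comp0 : (0 : QA) \Po Y = 0.
Proof. by rewrite -polyC0 comp_polyC. Qed.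
Lemma comp_a1 : a1 \Po Y = a1.
Proof. by rewrite /a1 comp_polyC. Qed.
Lemma comp_cst q : cst q \Po Y = cst q.
Proof. by rewrite /cst comp_polyC. Qed.
Lemma comp_a2 : a2 \Po Y = Y.
Proof. by rewrite /a2 comp_polyX. Qed.

Lemma sizeY : size Y = 3%N.
Proof.
rewrite /Y /cst /a2 /a1 size_Cmul; last by rewrite polyC_eq0.
by rewrite size_mul ?size_polyX ?size_XsubC // ?polyX_eq0 // -size_poly_eq0 size_XsubC.
Qed.

Lemma comp_inj (p : QA) : p \Po Y = 0 -> p = 0.
Proof.
move=> h; have := size_comp_poly p Y; rewrite h size_poly0 sizeY /= => /esym /eqP.
rewrite muln_eq0 /= orbF => /eqP hp.
have : (size p <= 1)%N by move: hp; case: (size p) => [|[|]].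
move/size1_polyC => ep; move: h; rewrite ep comp_polyC => ->; by [].
Qed.

Lemma theta_r r : is_universal_abel r -> forall n, r n \Po Y = Rs n.
Proof.
move=> hr; have [r0 r1 r2 _] := hr.
apply: rec_unique.
- by rewrite r0 comp1.
- by rewrite /Rs cc0 /= mul0r addr0.
- by rewrite r1 Rs1 comp_polyM comp_cst comp_a1.
- by rewrite r2 comp_a2 /Rs cc2 /= mul0r addr0.
- move=> i hi; have := @rec_of_assoc r hr i hi; rewrite /RecEq => h.
  have := congr1 (comp_poly Y) h; rewrite comp_sumQ comp_polyM => <-.
  by apply: eq_bigr => n _; rewrite !comp_polyM comp_polyD comp_polyM !comp_nat.
- exact: Rs_rec.
Qed.

Lemma theta_den r : is_universal_abel r -> forall k, abel_den r k \Po Y = Ds k.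
Proof.
move=> hr [|[|k]].
- by rewrite /= comp1 /Ds cc0 /= mul0r addr0.
- by rewrite /= comp_a1 /Ds cc1 /= mul1r /al /be; ring.
- by rewrite /= theta_r // /Rs /Ds /= !mul0r.
Qed.

Lemma theta_m r m : is_universal_abel r -> is_abel_log r m ->
  forall n, m n \Po Y = Ms n.
Proof.
move=> hr [m0 hm].
apply: (@log_unique Ds).
- by rewrite /Ds cc0 /= mul0r addr0.
- by rewrite m0 comp1 /Ms qq1.
- move=> n hn; rewrite /LogEq; have := hm n hn => h.
  have := congr1 (comp_poly Y) h; rewrite comp_sumQ comp0 => e.
  apply: etrans e; apply: eq_bigr => k _.
  by rewrite !comp_polyM comp_nat theta_den.
- exact: Ms_log.
Qed.


Lemma twoY : 2%:R * Y = a2 * (a2 - a1).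
Proof. by rewrite /Y mulrA mulr_natl mulr2n cst_half mul1r. Qed.

Lemma comp_prodQ I (s : seq I) (P : pred I) (F : I -> QA) q :
  (\prod_(j <- s | P j) F j) \Po q = \prod_(j <- s | P j) (F j \Po q).
Proof.
elim: s => [|x s IH]; first by rewrite !big_nil comp_polyC.
by rewrite !big_cons; case: (P x); rewrite ?comp_polyM IH.
Qed.

Definition H (n j : nat) : QA := j%:R * de - n%:R * al.

Lemma Qp_at0 n : (0 < n)%N -> (Qp n).[0] = kf n * \prod_(1 <= j < n) H n j.
Proof.
move=> n0; rewrite /Qp /Qprod hornerM hornerC horner_prod; congr (_ * _).
rewrite big_add1 big_mkord; apply: eq_bigr => j _.
by rewrite hornerXsubC /H; ring.
Qed.

Lemma fact_pred n : (0 < n)%N -> ((n.-1)`!)%:R = \prod_(1 <= j < n) (j%:R : QA).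
Proof.
case: n => // n _; rewrite /= fact_prod natr_prod.
by apply: eq_bigr.
Qed.

Definition fj (n j : nat) : QA :=
  a1 * a1 - cst ((2 * (n - 2 * j) ^ 2)%:R / (j * (n - j))%:R) * Y.

Lemma pairH n j : (1 <= j)%N -> (2 * j < n)%N ->
  H n j * H n (n - j) = (j%:R * (n - j)%:R) * fj n j.
Proof.
move=> h1 h2.
have hc0 : ((j * (n - j))%:R : rat) * ((2 * (n - 2 * j) ^ 2)%:R / (j * (n - j))%:R)
    = (2 * (n - 2 * j) ^ 2)%:R.
  rewrite mulrC divfK // pnatr_eq0 muln_eq0 negb_or; apply/andP; split; apply/eqP; lia.
have hc := congr1 cst hc0; rewrite cstM !cst_nat natrM in hc.
rewrite /fj [RHS]mulrBr [X in _ - X]mulrA hc.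
have e2 : ((2 * (n - 2 * j) ^ 2)%:R : QA) * Y = (n%:R - 2%:R * j%:R) ^+ 2 * (a2 * (a2 - a1)).
  rewrite natrM natrX natrB ?natrM; last by lia.
  rewrite -twoY; ring.
rewrite e2 /H natrB; last by lia.
rewrite /de /al; ring.
Qed.

Lemma kk n : (0 < n)%N -> kf n * ((n.-1)`!)%:R = cst (n%:R^-1).
Proof.
case: n => // n _; rewrite /kf -cst_nat -cstM; congr cst.
rewrite /= factS natrM invfM -mulrA mulVf ?mulr1 //.
by rewrite pnatr_eq0 -lt0n fact_gt0.
Qed.

Lemma rhs_theta n : (2 <= n)%N -> abel_rhs n \Po Y = (Qp n).[0].
Proof.
move=> hn.
have n0 : (0 < n)%N by lia.
rewrite Qp_at0 // (@prod_split _ (H n)) //.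
rewrite /abel_rhs !comp_polyM comp_cst comp_prodQ.
have es : (if odd n then 1 else - a1) \Po Y = (if odd n then 1 else - a1).
  by case: (odd n); [exact: comp1 | rewrite /a1 -polyCN comp_polyC].
rewrite es.
rewrite (eq_bigr (fj n)) => [|j _]; last first.
  by rewrite comp_polyB expr2 !comp_polyM comp_a1 comp_cst comp_a2.
have ep : \prod_(1 <= j < n | (2 * j < n)%N) (H n j * H n (n - j)) =
   (\prod_(1 <= j < n | (2 * j < n)%N) ((j%:R : QA) * (n - j)%:R)) *
   \prod_(1 <= j < n | (2 * j < n)%N) fj n j.
  rewrite -big_split /= big_nat_cond [RHS]big_nat_cond.
  by apply: eq_bigr => j /andP [/andP [h1 h2] h3]; exact: pairH.
rewrite ep.
have hf := @fact_pred n n0; rewrite (@prod_split _ (fun j => (j%:R : QA))) // in hf.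
have k0 := @kk n n0.
case ho : (odd n) in hf *.
  by rewrite -k0 hf; ring.
have eh : H n n./2 = - ((n./2)%:R) * a1.
  have e : (n%:R : QA) = (n./2)%:R + (n./2)%:R.
    by rewrite -natrD addnn even_halfK ?ho.
  by rewrite /H e /de /al; ring.
by rewrite eh -k0 hf; ring.
Qed.

Theorem proposition4p1 (r m : nat -> QA) :
  is_universal_abel r -> is_abel_log r m ->
  forall n : nat, (2 <= n)%N -> m n.-1 = abel_rhs n.
Proof.
move=> hr hm n hn.
apply/eqP; rewrite -subr_eq0; apply/eqP; apply: comp_inj.
rewrite comp_polyB (@theta_m r m hr hm) rhs_theta // /Ms prednK ?subrr //; lia.
Qed.
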